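(* Let $G=(V\cup\{O\},E)$ be a connected, unweighted, undirected graph, where $V$ is a set of $n$ terminals and $O\notin V$ is the depot, and let $k\in[1,n]$ be an integer tour capacity. Let $\mathrm{opt}$ denote the minimum cost of a feasible solution to the graphic CVRP on this instance, and let $\mathrm{rad}=\frac{2}{k}\sum_{v\in V}\mathrm{dist}(v)$. Then \[ \mathrm{opt}\geq \mathrm{rad}+\frac{n}{2}-\frac{n}{2k^2}. \]
   Context: For $v\in V$, $\mathrm{dist}(v)$ is the number of edges on a shortest $v$-to-$O$ path in $G$. A tour is a walk $z_1z_2\dots z_p$ in $G$ with $z_1=z_p=O$ and $(z_i,z_{i+1})\in E$ for all $i\in[1,p-1]$; its cost is $p-1$ (the number of edges traversed, with multiplicity). In the graphic CVRP, each terminal has unit demand; a feasible solution is a set of tours, each starting and ending at $O$, together with an assignment of each terminal to exactly one tour that visits it (the tour ''covers'' its demand), such that each tour covers at most $k$ terminals. The cost of a solution is the total cost of its tours, and the goal is to minimize this cost. *)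

(* Defs.v *)
From mathcomp Require Import all_boot all_order all_algebra.
Set Implicit Arguments. Unset Strict Implicit. Unset Printing Implicit Defensive.

Section CVRP.
Variables (T : finType) (e : rel T) (O : T).

Definition simple_graph : Prop := symmetric e /\ irreflexive e.

Definition connected_graph : Prop := forall x y : T, connect e x y.

Definition walk_to_depot (v : T) (m : nat) : bool :=
  [exists p : m.-tuple T, path e v p && (last v p == O)].

(* dist v = number of edges on a shortest v-to-O path: the least m with a
   walk of m edges from v to O (in a connected graph this m is < #|T|). *)
Definition dist (v : T) : nat :=
  find (walk_to_depot v) (iota 0 #|T|).

Definition is_tour (t : seq T) : bool :=
  if t is x :: t' then [&& x == O, path e x t' & last x t' == O] else false.

Definition tour_cost (t : seq T) : nat := (size t).-1.

Definition feasible (k : nat) (tours : seq (seq T)) (a : T -> nat) : Prop :=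
  [/\ all is_tour tours,
      (forall v, v != O -> a v < size tours /\ v \in nth [::] tours (a v)) &
      (forall i, i < size tours -> #|[set v | (v != O) && (a v == i)]| <= k)].

Definition sol_cost (tours : seq (seq T)) : nat := \sum_(t <- tours) tour_cost t.

End CVRP.

(* Main.v *)
Require Import Defs.
From mathcomp Require Import all_boot all_order all_algebra zify ring.
Set Implicit Arguments. Unset Strict Implicit. Unset Printing Implicit Defensive.
Import Order.TTheory GRing.Theory Num.Theory.

Section W.
Variables (T : finType) (e : rel T) (O : T).

Lemma dist_le v m : walk_to_depot e O v m -> dist e O v <= m.
Proof.
move=> H; rewrite /dist.
case: (ltnP m #|T|) => Hm; last by apply: leq_trans (find_size _ _) _; rewrite size_iota.
rewrite leqNgt; apply/negP => /(before_find 0).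
by rewrite nth_iota // add0n H.
Qed.

Lemma dist_walk v p : path e v p -> last v p = O -> dist e O v <= size p.
Proof.
move=> Hp Hl; apply: dist_le; apply/existsP; exists (in_tuple p) => /=.
by rewrite Hp Hl eqxx.
Qed.

Lemma last_take_nth (x : T) s i : i <= size s -> last x (take i s) = nth x (x :: s) i.
Proof.
elim: s x i => [|y s IH] x [|i] //= Hi.
by rewrite IH // (set_nth_default x) //=; rewrite ltnS.
Qed.

Lemma last_rev_belast (x : T) q : last (last x q) (rev (belast x q)) = x.
Proof.
case: q => [|y q] //=.
by rewrite rev_cons last_rcons.
Qed.

Lemma dist_pos s i : symmetric e -> path e O s -> last O s = O -> i <= size s ->
  dist e O (nth O (O :: s) i) <= minn i (size s - i).
Proof.
move=> sym Hp Hl Hi.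
have Hs := cat_take_drop i s.
have Hp' := Hp; rewrite -Hs cat_path in Hp'; case/andP: Hp' => Hp1 Hp2.
rewrite last_take_nth // in Hp2.
have d1 : dist e O (nth O (O :: s) i) <= size s - i.
  rewrite -size_drop; apply: dist_walk => //.
  by rewrite -(last_take_nth O Hi) -last_cat Hs.
have d2 : dist e O (nth O (O :: s) i) <= i.
  rewrite -(last_take_nth O Hi) -[X in _ <= X](size_takel Hi) -(size_belast O) -size_rev.
  apply: dist_walk; last by rewrite last_rev_belast.
  rewrite rev_path.
  by rewrite (@eq_path _ _ e) // => a b; rewrite /= sym.
by rewrite leq_min d1 d2.
Qed.
Lemma exists_min (f : nat -> nat) (P : seq nat) : P != [::] ->
  exists2 x, x \in P & forall y, y \in P -> f x <= f y.
Proof.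
elim: P => [//|a P IH] _.
case: (eqVneq P [::]) => [->|/IH [x xP Hx]].
  by exists a => [|y]; rewrite ?inE // => /eqP ->.
case: (leqP (f a) (f x)) => H.
  exists a; first by rewrite inE eqxx.
  move=> y; rewrite inE => /orP [/eqP -> //|/Hx]; lia.
exists x; first by rewrite inE xP orbT.
move=> y; rewrite inE => /orP [/eqP -> |/Hx //]; lia.
Qed.

Lemma range_bound L m (Q : seq nat) : uniq Q ->
  (forall y, y \in Q -> y <= L /\ m <= minn y (L - y)) ->
  size Q <= (L - 2 * m).+1.
Proof.
move=> uQ H.
have -> : (L - 2 * m).+1 = size (iota m (L - 2 * m).+1) by rewrite size_iota.
apply: uniq_leq_size => // y /H [h1 h2]; rewrite mem_iota; lia.
Qed.

Lemma sumA L : forall n (P : seq nat), size P <= n -> uniq P ->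
  (forall x, x \in P -> x <= L) ->
  4 * (\sum_(p <- P) minn p (L - p)) + (size P)^2 <= 2 * size P * L + 1.
Proof.
elim=> [|n IH] P.
  by rewrite leqn0 size_eq0 => /eqP -> _ _; rewrite big_nil.
move=> sP uP HL.
case: P sP uP HL => [|x0 [|x1 P']] sP uP HL.
- by rewrite big_nil.
- rewrite big_cons big_nil /=; have := HL x0 (mem_head _ _); lia.
set P := [:: x0, x1 & P'] in sP uP HL *.
have [a aP Ha] := @exists_min (fun p => minn p (L - p)) P isT.
set P1 := rem a P.
have sP1 : size P1 = (size P).-1 by rewrite size_rem.
have P1n : P1 != [::] by rewrite -size_eq0 sP1.
have [b bP Hb] := exists_min (fun p => minn p (L - p)) P1n.
set P2 := rem b P1.
have sP2 : size P2 = (size P1).-1 by rewrite size_rem.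
have uP1 : uniq P1 by apply: rem_uniq.
have uP2 : uniq P2 by apply: rem_uniq.
have HL1 : forall x, x \in P1 -> x <= L by move=> x /mem_rem /HL.
have HL2 : forall x, x \in P2 -> x <= L by move=> x /mem_rem /HL1.
have IH2 := IH P2 _ uP2 HL2.
have rA := @range_bound L (minn a (L - a)) P uP (fun y yP => conj (HL y yP) (Ha y yP)).
have rB := @range_bound L (minn b (L - b)) P1 uP1 (fun y yP => conj (HL1 y yP) (Hb y yP)).
have aL := HL a aP. have bL := HL1 b bP.
rewrite (perm_big _ (perm_to_rem aP)) big_cons -/P1.
rewrite (perm_big _ (perm_to_rem bP)) big_cons -/P2.
move: IH2 rA rB aL bL sP1 sP2 sP.
rewrite /P /=.
set s2 := size P2. set S := \sum_(p <- P2) _.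
move=> IH2 rA rB aL bL sP1 sP2 sP.
have e2 : size P' = s2 by lia.
rewrite e2 in rA rB sP *.
have := IH2 ltac:(lia).
nia.
Qed.
Lemma arith k D F s L : 0 < k -> D <= F -> 4 * F + s^2 <= 2 * s * L + 1 -> s <= L - 1 -> s <= k ->
  4 * k * D + s * k^2 <= 2 * k^2 * L + s.
Proof.
move=> k0 DF H sL sk.
have H1 : 4 * k * D + k * s^2 <= k * (2 * s * L + 1).
  have : k * (4 * F + s^2) <= k * (2 * s * L + 1) by rewrite leq_mul2l H orbT.
  have : k * D <= k * F by rewrite leq_mul2l DF orbT.
  lia.
case: (eqVneq s k) => [E|ne].
  subst s. lia.
have sk' : s < k by rewrite ltn_neqAle ne.
case: (posnP s) => [s0|spos].
  subst s. have : 4 * D <= 1 by move: H; rewrite !mul0n; lia.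
  lia.
have sL' : s + 1 <= L by lia.
have : (k - s) * (s * k + 1) <= (k - s) * (2 * k * L).
  rewrite leq_mul2l; apply/orP; right.
  have : k * (s + 1) <= k * L by rewrite leq_mul2l sL' orbT.
  lia.
move: (k - s) (subnK (ltnW sk')) => d Ek.
rewrite -Ek in H1 *. nia.
Qed.

Lemma tour_bound (k : nat) (t : seq T) (S : {set T}) : symmetric e -> 0 < k ->
  is_tour e O t -> (forall v, v \in S -> v != O /\ v \in t) -> #|S| <= k ->
  4 * k * (\sum_(v in S) dist e O v) + #|S| * k^2 <= 2 * k^2 * tour_cost t + #|S|.
Proof.
move=> sym k0 Ht HS Sk.
case: t Ht HS => [//|x s] /and3P [/eqP -> Hp /eqP Hl] HS.
rewrite /tour_cost /=.
set P := [seq index v (O :: s) | v <- enum S].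
have Hv : forall v, v \in enum S -> v != O /\ v \in O :: s by move=> v; rewrite mem_enum; apply: HS.
have HD : \sum_(v in S) dist e O v <= \sum_(p <- P) minn p (size s - p).
  rewrite -big_enum big_map !big_seq; apply: leq_sum => v /Hv [vO vt].
  have Hi : index v (O :: s) <= size s by have := index_mem v (O :: s); rewrite vt.
  by have := dist_pos sym Hp Hl Hi; rewrite nth_index.
have uP : uniq P.
  rewrite map_inj_in_uniq ?enum_uniq // => u v /Hv [_ ut] /Hv [_ vt] E.
  by rewrite -(nth_index O ut) E nth_index.
have HP : forall p, p \in P -> 1 <= p <= size s - 1.
  move=> p /mapP [v /Hv [vO vt] ->].
  have Hi : index v (O :: s) < (size s).+1 by have := index_mem v (O :: s); rewrite vt.
  have H1 : index v (O :: s) != size s.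
    apply/eqP => E; move: vO; rewrite -(nth_index O vt) E.
    by have := nth_last O (O :: s); rewrite /= => ->; rewrite Hl eqxx.
  have H0 : index v (O :: s) = (index v s).+1 by rewrite /= eq_sym (negbTE vO).
  lia.
have sP : size P = #|S| by rewrite size_map cardE.
have sL : size P <= size s - 1.
  have -> : size s - 1 = size (iota 1 (size s - 1)) by rewrite size_iota.
  apply: uniq_leq_size => // p /HP; rewrite mem_iota; lia.
have HA := @sumA (size s) (size P) P (leqnn _) uP (fun p pP => ltac:(have := HP p pP; lia)).
rewrite -sP; apply: (arith k0 HD HA) => //.
by rewrite sP.
Qed.

Lemma part (F : T -> nat) N (a : T -> nat) : (forall v, v != O -> a v < N) ->
  \sum_(v | v != O) F v = \sum_(i < N) \sum_(v in [set v | (v != O) && (a v == i)]) F v.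
Proof.
move=> Ha.
under [RHS]eq_bigr => i _ do rewrite big_mkcond /=.
rewrite exchange_big /= big_mkcond; apply: eq_bigr => v _.
case: (eqVneq v O) => [->|vO] /=.
  by rewrite big1 // => i _; rewrite inE eqxx.
rewrite (bigD1 (Ordinal (Ha v vO))) //= inE vO eqxx /= big1 ?addn0 // => j /negbTE nj.
rewrite inE vO /=; case: ifP => // /eqP E.
have : j == Ordinal (Ha v vO) by apply/eqP/val_inj; rewrite /= E.
by rewrite nj.
Qed.
End W.

Theorem mainTheorem1 (T : finType) (e : rel T) (O : T) (k : nat) :
  simple_graph e -> connected_graph e ->
  (1 <= k <= #|T|.-1)%N ->
  forall (tours : seq (seq T)) (a : T -> nat),
    feasible e O k tours a ->
    ((2%:R / k%:R) * (\sum_(v | v != O) (dist e O v)%:R)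
       + (#|T|.-1)%:R / 2%:R - (#|T|.-1)%:R / (2 * k ^ 2)%:R
     <= (sol_cost tours)%:R :> rat)%R.
Proof.
move=> [sym _] _ /andP [k0 _] tours a [Hall Ha Hk].
set N := size tours.
set S := fun i : nat => [set v | (v != O) && (a v == i)].
have HaN : forall v, v != O -> a v < N by move=> v /Ha [].
have nE : #|T|.-1 = \sum_(i < N) #|S i|.
  rewrite -(cardC1 O) -sum1_card (part _ HaN); apply: eq_bigr => i _.
  by rewrite sum1_card.
have CE : sol_cost tours = \sum_(i < N) tour_cost (nth [::] tours i).
  by rewrite /sol_cost (big_nth [::]) big_mkord.
have Hnat : 4 * k * (\sum_(v | v != O) dist e O v) + #|T|.-1 * k^2 <=
            2 * k^2 * sol_cost tours + #|T|.-1.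
  rewrite nE CE (part _ HaN) big_distrr /= big_distrl /= -big_split /=.
  rewrite big_distrr /= -big_split /=; apply: leq_sum => i _.
  apply: tour_bound => //.
  - by apply/(all_nthP [::]) => //.
  - move=> v; rewrite inE => /andP [vO /eqP <-]; split => //.
    by have [] := Ha v vO.
  - by apply: Hk.
rewrite -natr_sum.
set D := \sum_(v | v != O) dist e O v in Hnat *.
set n := #|T|.-1 in Hnat *.
set C := sol_cost tours in Hnat *.
have kr : (k%:R != 0 :> rat)%R by rewrite pnatr_eq0 -lt0n.
have -> : (2%:R / k%:R * D%:R + n%:R / 2%:R - n%:R / (2 * k ^ 2)%:R
          = ((4 * k * D + n * k^2)%:R - n%:R) / (2 * k ^ 2)%:R :> rat)%R.
  rewrite !natrD !natrM ?natrX; field.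
  by rewrite kr andbT -natrM -natrD pnatr_eq0 -lt0n addn_gt0 muln_gt0 k0.
rewrite ler_pdivrMr; last by rewrite ltr0n muln_gt0 expn_gt0 k0.
rewrite lerBlDr -natrM -natrD ler_nat.
by rewrite (mulnC C).
Qed.
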